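(* Let $z = \frac{a + b\sqrt{-D}}{c} \in G_D(\mathbb{Q})$ where $\gcd(a,b) = 1$ and $c > 1$, and let $c = p_1^{\alpha_1} \cdots p_k^{\alpha_k}$ be the prime factorization of $c$. Then each $p_i$ is an odd prime with $\left(\frac{-D}{p_i}\right)=1$ (so $\zeta_{p_i}$ is defined), and $$z \ = \ \pm \zeta_{p_1}^{\pm \alpha_1}\cdots \zeta_{p_k}^{\pm \alpha_k},$$ where the signs of the exponents may be chosen independently.
   Context: Let $D>1$ be a square-free integer with $-D \equiv 2$ or $3 \pmod 4$, and assume the class group $C(-4D)$ of primitive positive-definite binary quadratic forms of discriminant $-4D$ is a free $\mathbb{Z}_2$-module, i.e. $C(-4D)\cong(\mathbb{Z}/2\mathbb{Z})^n$ for some $n\ge 0$. Let $G_D(\mathbb{Q}) := \{a + b\sqrt{-D} \in \mathbb{Q}[\sqrt{-D}] : a^2 + Db^2 = 1\}$, a group under multiplication. For each odd prime $q$ with Legendre symbol $\left(\frac{-D}{q}\right) = 1$, there exist unique positive integers $x_0, y_0$ with $\gcd(x_0,y_0)=1$ and $q^2 = x_0^2 + D y_0^2$; define $\zeta_q := \frac{x_0 + y_0\sqrt{-D}}{q} \in G_D(\mathbb{Q})$. *)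

(* Defs.v *)
From mathcomp Require Import all_boot all_order all_algebra all_field.
Set Implicit Arguments. Unset Strict Implicit. Unset Printing Implicit Defensive.
Import Order.TTheory GRing.Theory Num.Theory.
Local Open Scope ring_scope.

Definition squarefree (D : nat) : Prop :=
  forall p : nat, prime p -> ~~ (p * p %| D)%N.

Definition legendre_negD_one (D p : nat) : bool :=
  ~~ (p %| D)%N && [exists x : 'I_p, (p %| x ^ 2 + D)%N].

Definition bqf (a b c x y : int) : int := a * x ^+ 2 + b * x * y + c * y ^+ 2.

Definition properly_equiv (a b c a' b' c' : int) : Prop :=
  exists p q r s : int, p * s - q * r = 1 /\
    forall x y : int, bqf a b c (p * x + q * y) (r * x + s * y) = bqf a' b' c' x y.

Definition prim_pos_def (d a b c : int) : Prop :=
  b ^+ 2 - 4%:R * a * c = d /\ 0 < a /\ gcdz (gcdz a b) c = 1.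

(* The form class group C(d) is an elementary abelian 2-group, i.e.
   C(d) = (Z/2Z)^n for some n: every class equals its inverse.  In the
   form class group the inverse of the class of (a,b,c) is the class of
   (a,-b,c), so this says every primitive positive definite form of
   discriminant d is properly equivalent to its opposite. *)
Definition class_group_elem2 (d : int) : Prop :=
  forall a b c : int, prim_pos_def d a b c -> properly_equiv a b c a (- b) c.

Definition sqrtmD (D : nat) : algC := sqrtC (- (D%:R)).

Definition in_GD (D : nat) (z : algC) : Prop :=
  exists u v : rat, z = ratr u + ratr v * sqrtmD D /\ u ^+ 2 + D%:R * v ^+ 2 = 1.

(* zeta_q = (x0 + y0 sqrt(-D)) / q with x0, y0 > 0 coprime and
   q^2 = x0^2 + D y0^2 (such x0,y0 are unique; necessarily x0, y0 <= q).
   If no such pair exists we return 1 (never used under the hypotheses). *)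
Definition zeta (D q : nat) : algC :=
  match [pick xy : 'I_q.+1 * 'I_q.+1 |
          [&& (0 < xy.1)%N, (0 < xy.2)%N, coprime xy.1 xy.2 &
              (q ^ 2 == xy.1 ^ 2 + D * xy.2 ^ 2)%N]] with
  | Some xy => ((xy.1 : nat)%:R + (xy.2 : nat)%:R * sqrtmD D) / q%:R
  | None => 1
  end.

(* Main.v *)
Require Import Defs.
From mathcomp Require Import all_boot all_order all_algebra all_field.
From mathcomp Require Import zify ring lra.
Import Order.TTheory GRing.Theory Num.Theory.
Local Open Scope ring_scope.
Set Implicit Arguments. Unset Strict Implicit.

Lemma zEuclid (p : nat) (x y : int) : prime p -> (p%:Z %| x * y)%Z -> (p%:Z %| x)%Z \/ (p%:Z %| y)%Z.
Proof. move=> pp; rewrite !dvdzE abszM /= Euclid_dvdM // => /orP; tauto. Qed.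

Lemma zEuclid2 (p : nat) (x : int) : prime p -> (p%:Z %| x ^+ 2)%Z -> (p%:Z %| x)%Z.
Proof. by move=> pp; rewrite expr2 => /(zEuclid pp) []. Qed.

Lemma dvdz_gcd1 (p : nat) (x y : int) : prime p -> gcdz x y = 1 ->
  (p%:Z %| x)%Z -> (p%:Z %| y)%Z -> False.
Proof.
move=> pp hg hx hy; have : (p%:Z %| gcdz x y)%Z by rewrite dvdz_gcd hx.
by rewrite hg dvdz1 /=; move/eqP=> e; move: pp; rewrite e.
Qed.

Lemma L_nd (D p : nat) (u v : int) : prime p -> ~~ (p %| D)%N -> gcdz u v = 1 ->
  (p%:Z %| u ^+ 2 + D%:Z * v ^+ 2)%Z -> ~ (p%:Z %| u)%Z /\ ~ (p%:Z %| v)%Z.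
Proof.
move=> pp pD hg hn.
have hv : (p%:Z %| u)%Z -> (p%:Z %| v)%Z.
  move=> hu; have : (p%:Z %| D%:Z * v ^+ 2)%Z.
    have -> : D%:Z * v ^+ 2 = (u ^+ 2 + D%:Z * v ^+ 2) - u * u by ring.
    by rewrite rpredB // dvdz_mull.
  case/(zEuclid pp); last exact: zEuclid2.
  by rewrite dvdzE /= (negbTE pD).
split=> h.
  exact: (dvdz_gcd1 pp hg h (hv h)).
have hu : (p%:Z %| u)%Z.
  apply: (zEuclid2 pp).
  have -> : u ^+ 2 = (u ^+ 2 + D%:Z * v ^+ 2) - D%:Z * v * v by ring.
  by rewrite rpredB // dvdz_mull.
exact: (dvdz_gcd1 pp hg hu h).
Qed.

Lemma dvdz_sq (p c : nat) : (p %| c)%N -> ((p%:Z) ^+ 2 %| (c%:Z) ^+ 2)%Z.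
Proof. by move=> h; apply: dvdz_exp2r; rewrite dvdzE. Qed.

Lemma not2 (p : nat) (a x : int) : prime p -> ~~ (p %| 2)%N -> ~ (p%:Z %| a)%Z ->
  ~ (p%:Z %| x)%Z -> ~ (p%:Z %| 2 * (a * x))%Z.
Proof.
move=> pp p2 ha hx /(zEuclid pp) [|/(zEuclid pp) []] //.
by rewrite dvdzE /= (negbTE p2).
Qed.

Lemma sq_gauss (p : nat) (A A' : int) : prime p -> ~ (p%:Z %| A')%Z ->
  ((p%:Z) ^+ 2 %| A * A')%Z -> ((p%:Z) ^+ 2 %| A)%Z.
Proof.
move=> pp hA h; rewrite -(@Gauss_dvdzl _ A A') //.
rewrite coprimezE abszX /= coprimeXl // prime_coprime //.
by apply/negP.
Qed.

Lemma step (D p : nat) (x y a b : int) (c : nat) :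
  prime p -> ~~ (p %| 2)%N -> ~~ (p %| D)%N ->
  x ^+ 2 + D%:Z * y ^+ 2 = (p%:Z) ^+ 2 -> gcdz x y = 1 ->
  a ^+ 2 + D%:Z * b ^+ 2 = (c%:Z) ^+ 2 -> gcdz a b = 1 -> (p %| c)%N ->
  (p%:Z %| b * x - a * y)%Z ->
  exists a' b', a = a' * x - D%:Z * b' * y /\ b = a' * y + b' * x /\
    a' ^+ 2 + D%:Z * b' ^+ 2 = ((c %/ p)%N%:Z) ^+ 2 /\ gcdz a' b' = 1.
Proof.
move=> pp p2 pD hx gx hn gab pc hB.
set P := p%:Z.
have P0 : P != 0 by rewrite /P; case: (p) pp.
have P20 : P ^+ 2 != 0 by rewrite expf_neq0.
have hpc : (P %| c%:Z)%Z by rewrite dvdzE.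
have [nx ny] : ~ (P %| x)%Z /\ ~ (P %| y)%Z.
  by apply: (L_nd pp pD gx); rewrite hx dvdz_exp.
have [na nb] : ~ (P %| a)%Z /\ ~ (P %| b)%Z.
  by apply: (L_nd pp pD gab); rewrite hn dvdz_exp.
set A := a * x + D%:Z * b * y.
set B := b * x - a * y.
have hA : (P %| A)%Z.
  have : (P %| b * A)%Z.
    have -> : b * A = a * B + y * (a ^+ 2 + D%:Z * b ^+ 2) by rewrite /A /B; ring.
    by rewrite hn rpredD // dvdz_mull // dvdz_exp.
  by case/(zEuclid pp).
have nA' : ~ (P %| a * x - D%:Z * b * y)%Z.
  move=> h; apply: (not2 pp p2 na nx).
  have -> : 2 * (a * x) = A + (a * x - D%:Z * b * y) by rewrite /A; ring.
  by rewrite rpredD.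
have nB' : ~ (P %| b * x + a * y)%Z.
  move=> h; apply: (not2 pp p2 nb nx).
  have -> : 2 * (b * x) = B + (b * x + a * y) by rewrite /B; ring.
  by rewrite rpredD.
have hA2 : (P ^+ 2 %| A)%Z.
  apply: (sq_gauss pp nA').
  have -> : A * (a * x - D%:Z * b * y) =
     x ^+ 2 * (a ^+ 2 + D%:Z * b ^+ 2) - D%:Z * b ^+ 2 * (x ^+ 2 + D%:Z * y ^+ 2)
    by rewrite /A; ring.
  by rewrite hn hx rpredB // dvdz_mull // dvdz_sq.
have hB2 : (P ^+ 2 %| B)%Z.
  apply: (sq_gauss pp nB').
  have -> : B * (b * x + a * y) =
     b ^+ 2 * (x ^+ 2 + D%:Z * y ^+ 2) - y ^+ 2 * (a ^+ 2 + D%:Z * b ^+ 2)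
    by rewrite /B; ring.
  by rewrite hn hx rpredB // dvdz_mull // dvdz_sq.
exists (A %/ P ^+ 2)%Z, (B %/ P ^+ 2)%Z.
have eA := divzK hA2; have eB := divzK hB2.
set a' := (A %/ P ^+ 2)%Z in eA *; set b' := (B %/ P ^+ 2)%Z in eB *.
have ea : a = a' * x - D%:Z * b' * y.
  apply: (mulIf P20).
  have -> : (a' * x - D%:Z * b' * y) * P ^+ 2 = (a' * P ^+ 2) * x - D%:Z * (b' * P ^+ 2) * y by ring.
  rewrite eA eB -hx /A /B; ring.
have eb : b = a' * y + b' * x.
  apply: (mulIf P20).
  have -> : (a' * y + b' * x) * P ^+ 2 = (a' * P ^+ 2) * y + (b' * P ^+ 2) * x by ring.
  rewrite eA eB -hx /A /B; ring.
split=> //; split=> //; split.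
  apply: (mulIf P20).
  have -> : ((c %/ p)%N%:Z) ^+ 2 * P ^+ 2 = (c%:Z) ^+ 2.
    by rewrite -exprMn -PoszM divnK.
  rewrite -hn -hx ea eb; ring.
apply/eqP; rewrite /gcdz; apply/eqP; congr Posz; apply/eqP.
have : (gcdz a' b' %| gcdz a b)%Z.
  rewrite dvdz_gcd ea eb.
  apply/andP; split; [apply: rpredB|apply: rpredD].
  - by apply: dvdz_mulr; apply: dvdz_gcdl.
  - by apply: dvdz_mulr; apply: dvdz_mull; apply: dvdz_gcdr.
  - by apply: dvdz_mulr; apply: dvdz_gcdl.
  - by apply: dvdz_mulr; apply: dvdz_gcdr.
by rewrite gab dvdz1.
Qed.

Lemma step_type (D p : nat) (x y a b a' b' : int) (c' : nat) :
  prime p -> ~~ (p %| D)%N -> gcdz a b = 1 ->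
  (p%:Z %| a ^+ 2 + D%:Z * b ^+ 2)%Z ->
  a = a' * x - D%:Z * b' * y -> b = a' * y + b' * x ->
  x ^+ 2 + D%:Z * y ^+ 2 = (p%:Z) ^+ 2 ->
  a' ^+ 2 + D%:Z * b' ^+ 2 = (c'%:Z) ^+ 2 -> (p %| c')%N ->
  (p%:Z %| b' * x - a' * y)%Z.
Proof.
move=> pp pD gab hn ea eb hx hn' pc.
have [_ nb] := L_nd pp pD gab hn.
have : (p%:Z %| (b' * x - a' * y) * (b' * x + a' * y))%Z.
  have -> : (b' * x - a' * y) * (b' * x + a' * y) =
    b' ^+ 2 * (x ^+ 2 + D%:Z * y ^+ 2) - y ^+ 2 * (a' ^+ 2 + D%:Z * b' ^+ 2) by ring.
  by rewrite hx hn' rpredB // dvdz_mull // dvdz_exp // dvdzE.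
case/(zEuclid pp) => // h; exfalso; apply: nb; rewrite eb.
by have -> : a' * y + b' * x = b' * x + a' * y by ring.
Qed.

Definition phi (D : nat) (a b : int) : algC := a%:~R + b%:~R * sqrtmD D.

Lemma sq_s (D : nat) : sqrtmD D ^+ 2 = - (D%:Z)%:~R.
Proof. by rewrite /sqrtmD sqrtCK. Qed.

Lemma phiM (D : nat) (a b x y : int) :
  phi D a b * phi D x y = phi D (a * x - D%:Z * b * y) (a * y + b * x).
Proof.
rewrite /phi.
have E : forall A B X Y d s : algC, s ^+ 2 = - d ->
  (A + B * s) * (X + Y * s) = (A * X - d * B * Y) + (A * Y + B * X) * s.
  by move=> A B X Y d s h; rewrite -[d]opprK -h; ring.
rewrite (E _ _ _ _ _ _ (sq_s D)).
by rewrite !(rmorphB, rmorphD, rmorphM).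
Qed.

Lemma peel (D p : nat) (x y : int) (k : nat) :
  prime p -> ~~ (p %| 2)%N -> ~~ (p %| D)%N ->
  x ^+ 2 + D%:Z * y ^+ 2 = (p%:Z) ^+ 2 -> gcdz x y = 1 ->
  forall (a b : int) (c : nat),
  a ^+ 2 + D%:Z * b ^+ 2 = (c%:Z) ^+ 2 -> gcdz a b = 1 -> (p ^ k %| c)%N ->
  ((0 < k)%N -> (p%:Z %| b * x - a * y)%Z) ->
  exists a' b', a' ^+ 2 + D%:Z * b' ^+ 2 = ((c %/ p ^ k)%N%:Z) ^+ 2 /\
    gcdz a' b' = 1 /\ phi D a b = phi D a' b' * phi D x y ^+ k.
Proof.
move=> pp p2 pD hx gx; elim: k => [|k IH] a b c hn gab hk ht.
  by exists a, b; rewrite divn1 expr0 mulr1.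
have pc : (p %| c)%N by apply: dvdn_trans hk; rewrite expnS dvdn_mulr.
have [a1 [b1 [ea [eb [hn1 g1]]]]] := step pp p2 pD hx gx hn gab pc (ht isT).
have hk1 : (p ^ k %| c %/ p)%N by rewrite dvdn_divRL // -expnSr.
have [|a' [b' [hn' [g' e']]]] := IH a1 b1 (c %/ p)%N hn1 g1 hk1.
  move=> k0; apply: (step_type pp pD gab _ ea eb hx hn1).
    by rewrite hn dvdz_exp // dvdzE.
  by apply: dvdn_trans hk1; rewrite -(prednK k0) expnS dvdn_mulr.
exists a', b'; split; first by rewrite expnS divnMA.
split=> //.
by rewrite ea eb -phiM e' exprSr mulrA.
Qed.

Lemma det_lemma (p r k : nat) (P Q S : int) : P * S = 1 ->
 bqf p (2*r)%N k (P*1 + Q*1) (0*1 + S*1) = bqf p (- (2*r)%N%:Z) k 1 1 ->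
 bqf p (2*r)%N k (P*1 + Q*(-1)) (0*1 + S*(-1)) = bqf p (- (2*r)%N%:Z) k 1 (-1) ->
 p%:Z * (- (P * Q)) = (2 * r)%N%:Z.
Proof.
move=> hPS H11 H1m.
have E := f_equal2 (fun u v => u - v) H11 H1m.
simpl in E.
have four : (4 : int) != 0 by [].
apply: (mulfI four).
have -> : 4 * (p%:Z * - (P * Q)) = - (bqf p (2*r)%N k (P*1 + Q*1) (0*1 + S*1) - bqf p (2*r)%N k (P*1 + Q*(-1)) (0*1 + S*(-1))) + 4 * r%:Z * (P * S).
  rewrite /bqf PoszM; ring.
rewrite E hPS /bqf PoszM; ring.
Qed.

Lemma nat_contra (X v p D : nat) : (1 < D)%N -> (0 < v * p)%N -> (X ^ 2 + D * (v * p) ^ 2 = p ^ 2)%N -> False.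
Proof.
move=> h1 h2 h3.
have hp : (0 < p)%N by move: h2; rewrite muln_gt0 => /andP[].
have hv : (0 < v)%N by move: h2; rewrite muln_gt0 => /andP[].
have e1 : (p ^ 2 <= (v * p) ^ 2)%N by rewrite leq_exp2r // leq_pmull.
have e2 : (2 * (v * p) ^ 2 <= D * (v * p) ^ 2)%N by rewrite leq_mul2r h1 orbT.
have e3 : (0 < p ^ 2)%N by rewrite expn_gt0 hp.
lia.
Qed.

Lemma abs_norm (X Y : int) (D p : nat) : X ^+ 2 + D%:Z * Y ^+ 2 = p%:Z ^+ 2 -> (`|X| ^ 2 + D * `|Y| ^ 2 = p ^ 2)%N.
Proof. move=> h. nia. Qed.

Lemma ex_rep (D p : nat) : (1 < D)%N -> prime p -> ~~ (p %| 2)%N ->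
  legendre_negD_one D p -> class_group_elem2 (- (4 * D)%:Z) ->
  exists X Y : nat, [/\ (0 < X)%N, (0 < Y)%N, coprime X Y & (p ^ 2 = X ^ 2 + D * Y ^ 2)%N].
Proof.
move=> D1 pp p2 /andP [pD /existsP [r hr]] hcl.
set k := ((r ^ 2 + D) %/ p)%N.
have hk : (k * p = r ^ 2 + D)%N by rewrite divnK.
have hkz : k%:Z * p%:Z = (r : nat)%:Z ^+ 2 + D%:Z by lia.
have pr : ~~ (p %| r)%N.
  apply/negP => h; move/negP: pD; apply.
  have h2 : (p %| r ^ 2)%N by rewrite dvdn_exp.
  by rewrite -(dvdn_addr D h2).
have cop : coprime p (2 * r) by rewrite prime_coprime // Euclid_dvdM // negb_or p2.
have hprim : prim_pos_def (- (4 * D)%:Z) p%:Z (2 * r)%N%:Z k%:Z.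
  split; first by lia.
  split; first by rewrite ltz_nat prime_gt0.
  by rewrite /gcdz /= (eqP cop) /= gcd1n.
have [P [Q [R [S [hdet H]]]]] := hcl _ _ _ hprim.
have H10 : p%:Z * P ^+ 2 + (2 * r)%N%:Z * P * R + k%:Z * R ^+ 2 = p%:Z.
  have h := H 1 0; rewrite /bqf in h.
  transitivity (p%:Z * 1 ^+ 2 + - (2 * r)%N%:Z * 1 * 0 + k%:Z * 0 ^+ 2); last by ring.
  rewrite -h; ring.
set X := p%:Z * P + (r : nat)%:Z * R.
have hXY : X ^+ 2 + D%:Z * R ^+ 2 = p%:Z ^+ 2.
  have -> : X ^+ 2 + D%:Z * R ^+ 2 = p%:Z * (p%:Z * P ^+ 2 + (2 * r)%N%:Z * P * R + k%:Z * R ^+ 2).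
    have -> : D%:Z = k%:Z * p%:Z - (r : nat)%:Z ^+ 2 by rewrite hkz; ring.
    rewrite /X PoszM; ring.
  by rewrite H10 expr2.
have R0 : R != 0.
  apply/eqP => R0; subst R.
  have H11 := H 1 1; have H1m := H 1 (-1).
  rewrite /bqf in H11 H1m.
  have e : p%:Z * (- (P * Q)) = (2 * r)%N%:Z.
    have hPS : P * S = 1 by move: hdet; rewrite mulr0 subr0.
    by apply: (det_lemma hPS (H 1 1) (H 1 (-1))).
  move: cop; rewrite prime_coprime // => /negP; apply.
  have : (p%:Z %| (2 * r)%N%:Z)%Z by rewrite -e dvdz_mulr.
  by rewrite dvdzE.
set X' := `|X|%N; set Y' := `|R|%N.
have hN : (X' ^ 2 + D * Y' ^ 2 = p ^ 2)%N by apply: abs_norm.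
have Y0 : (0 < Y')%N by rewrite absz_gt0.
have pY : ~~ (p %| Y')%N.
  apply/negP => /dvdnP [v ev]; rewrite ev in hN Y0; exact: (nat_contra D1 Y0 hN).
have X0 : (0 < X')%N.
  rewrite lt0n; apply/negP => /eqP X0; rewrite X0 in hN.
  rewrite exp0n // add0n in hN.
  have : (p %| D * Y' ^ 2)%N by rewrite hN dvdn_exp.
  by rewrite Euclid_dvdM // (negbTE pD) Euclid_dvdX // (negbTE pY).
exists X', Y'; split=> //.
have g0 : (0 < gcdn X' Y')%N by rewrite gcdn_gt0 X0.
rewrite /coprime; apply/negP => /negP g1.
have g2 : (1 < gcdn X' Y')%N by move: g0 g1; case: (gcdn _ _) => [|[|n]].
set l := pdiv (gcdn X' Y').
have lp : prime l := pdiv_prime g2.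
have lX : (l %| X')%N by apply: dvdn_trans (pdiv_dvd _) (dvdn_gcdl _ _).
have lY : (l %| Y')%N by apply: dvdn_trans (pdiv_dvd _) (dvdn_gcdr _ _).
have : (l %| p ^ 2)%N by rewrite -hN dvdn_add // ?dvdn_mull // dvdn_exp.
rewrite Euclid_dvdX // andbT dvdn_prime2 // => /eqP el.
by move: pY; rewrite -el lY.
Qed.

Local Open Scope ring_scope.

Lemma zeta_spec (D p : nat) : (1 < D)%N -> prime p -> ~~ (p %| 2)%N ->
  legendre_negD_one D p -> class_group_elem2 (- (4 * D)%:Z) ->
  exists x0 y0 : nat, [/\ (0 < x0)%N, (0 < y0)%N, coprime x0 y0,
    (p ^ 2 = x0 ^ 2 + D * y0 ^ 2)%N & zeta D p = phi D x0 y0 / p%:R].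
Proof.
move=> D1 pp p2 hl hcl; rewrite /zeta; case: pickP => [xy /and4P [h1 h2 h3 /eqP h4] | H].
  by exists xy.1, xy.2.
exfalso; have [X [Y [X0 Y0 cop hN]]] := ex_rep D1 pp p2 hl hcl.
have hX : (X < p.+1)%N by rewrite ltnS -(@leq_exp2r _ _ 2) // hN leq_addr.
have hY : (Y < p.+1)%N.
  rewrite ltnS -(@leq_exp2r _ _ 2) // hN.
  apply: leq_trans (leq_addl _ _); rewrite leq_pmull //; lia.
have := H (Ordinal hX, Ordinal hY).
by rewrite /= X0 Y0 cop hN eqxx.
Qed.

Local Close Scope ring_scope.
Lemma two_contra (A B D c : nat) : coprime A B -> (D %% 4 = 1 \/ D %% 4 = 2)%N ->
  (2 %| c)%N -> (A ^ 2 + D * B ^ 2 = c ^ 2)%N -> False.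
Proof.
move=> cop hD /dvdnP [w ->] hn.
rewrite (div.divn_eq A 2) (div.divn_eq B 2) (div.divn_eq D 4) in hn cop.
set x := A %/ 2 in hn cop; set y := B %/ 2 in hn cop; set z := D %/ 4 in hn.
have : (A %% 2 < 2)%N by rewrite ltn_mod.
have : (B %% 2 < 2)%N by rewrite ltn_mod.
case: (A %% 2) hn cop => [|[|i]] // ; case: (B %% 2) => [|[|j]] //; case: hD => -> hn cop _ _ //; try lia.
- by move: cop; rewrite /coprime !addn0 -muln_gcdl muln_eq1 andbF.
- by move: cop; rewrite /coprime !addn0 -muln_gcdl muln_eq1 andbF.
Qed.

Local Open Scope ring_scope.

Lemma gcdz_cop (a b : int) : gcdz a b = 1 -> coprime `|a| `|b|.
Proof. by rewrite /gcdz /coprime => [[->]]. Qed.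

Lemma mod4L (D : nat) : ((- (D%:Z)) %% 4)%Z = 2 \/ ((- (D%:Z)) %% 4)%Z = 3 -> (D %% 4 = 1 \/ D %% 4 = 2)%N.
Proof. move=> h. lia. Qed.
Lemma rhoL (p : nat) (rho : int) : 0 <= rho -> (rho < p%:Z) -> (`|rho| < p)%N /\ rho = `|rho|%N%:Z.
Proof. move=> h1 h2. lia. Qed.
Lemma e2L (u w p D B : nat) : ((u * p) ^ 2 + D * B ^ 2 = (w * p) ^ 2 -> D * B ^ 2 = p * p * (w * w) - p * p * (u * u))%N.
Proof. move=> h. lia. Qed.
Lemma absL (r D : nat) : absz (r%:Z ^+ 2 + D%:Z) = (r ^ 2 + D)%N.
Proof. lia. Qed.

Lemma primefacts (D p : nat) (a b : int) (c : nat) : (1 < D)%N -> squarefree D ->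
  ((- (D%:Z)) %% 4)%Z = 2 \/ ((- (D%:Z)) %% 4)%Z = 3 ->
  a ^+ 2 + D%:Z * b ^+ 2 = (c%:Z) ^+ 2 -> gcdz a b = 1 -> prime p -> (p %| c)%N ->
  ~~ (p %| 2)%N /\ legendre_negD_one D p.
Proof.
move=> D1 sqf hmod hn gab pp pc.
have hN := abs_norm hn.
have cop := gcdz_cop gab.
have hD4 := mod4L hmod.
have p2 : ~~ (p %| 2)%N.
  apply/negP; rewrite dvdn_prime2 // => /eqP e; subst p.
  exact: (two_contra cop hD4 pc hN).
have pD : ~~ (p %| D)%N.
  apply/negP => pD.
  have pc2 : (p %| c ^ 2)%N by rewrite dvdn_exp.
  have pA : (p %| `|a|)%N.
    have : (p %| `|a| ^ 2)%N by rewrite -(dvdn_addl _ (dvdn_mulr (`|b| ^ 2) pD)) hN.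
    by rewrite Euclid_dvdX // andbT.
  move: pD => /dvdnP [D' eD]; move: pA => /dvdnP [u eu]; move: pc => /dvdnP [w ew].
  have pD' : ~~ (p %| D')%N.
    apply/negP => /dvdnP [t et]; move: (sqf p pp); rewrite eD et -mulnA dvdn_mull //.
  have h2 : (p * p %| D' * p * `|b| ^ 2)%N.
    have e2 : (D' * p * `|b| ^ 2 = p * p * (w * w) - p * p * (u * u))%N.
      rewrite -eD; apply: e2L; by rewrite -eu -ew.
    by rewrite e2 dvdn_sub // dvdn_mulr.
  have h3 : (p %| D' * `|b| ^ 2)%N.
    by move: h2; rewrite mulnAC dvdn_pmul2r ?prime_gt0.
  move: h3; rewrite Euclid_dvdM // (negbTE pD') /= Euclid_dvdX // andbT => pB.
  have : (p %| gcdn `|a| `|b|)%N by rewrite dvdn_gcd pB eu dvdn_mull.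
  by rewrite (eqP cop) dvdn1 => /eqP e; move: pp; rewrite e.
split=> //; rewrite /legendre_negD_one pD /=.
set P := p%:Z.
have P0 : P != 0 by rewrite /P; case: (p) pp.
have [_ nb] : ~ (P %| a)%Z /\ ~ (P %| b)%Z.
  by apply: (L_nd pp pD gab); rewrite hn dvdz_exp // dvdzE.
have gbP : gcdz b P = 1.
  rewrite /gcdz; congr Posz; apply/eqP; change (coprime `|b| p); rewrite coprime_sym prime_coprime //.
  by apply/negP => h; apply: nb; rewrite dvdzE.
have [u [v e]] := Bezoutz b P; rewrite gbP in e.
set q := ((a * u) %/ P)%Z; set rho := ((a * u) %% P)%Z.
have erho : a * u = q * P + rho by apply: divz_eq.
have r0 : 0 <= rho by apply: modz_ge0.
have r1 : rho < P by move: (ltz_mod (a * u) P0).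
have [rl er] := rhoL r0 r1.
apply/existsP; exists (Ordinal rl) => /=.
have : (P %| rho ^+ 2 + D%:Z)%Z.
  have -> : rho ^+ 2 + D%:Z = (a * u - q * P) ^+ 2 + D%:Z * (u * b + v * P) * (u * b + v * P).
    have -> : rho = a * u - q * P by rewrite erho; ring.
    by rewrite e !mulr1.
  have -> : (a * u - q * P) ^+ 2 + D%:Z * (u * b + v * P) * (u * b + v * P) =
    u ^+ 2 * (a ^+ 2 + D%:Z * b ^+ 2) + P * (q ^+ 2 * P - 2 * a * u * q + D%:Z * (2 * u * b * v + v ^+ 2 * P)) by ring.
  rewrite hn; apply: rpredD; last by apply: dvdz_mulr; exact: dvdzz.
  by apply: dvdz_mull; apply: dvdz_exp => //; rewrite dvdzE.
rewrite er dvdzE /=.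
by rewrite expnS expn1.
Qed.

Lemma nat2int (x y D p : nat) : (p ^ 2 = x ^ 2 + D * y ^ 2)%N ->
  x%:Z ^+ 2 + D%:Z * y%:Z ^+ 2 = p%:Z ^+ 2.
Proof. move=> h; lia. Qed.

Lemma unit_sol (A B D : nat) : (1 < D)%N -> (A ^ 2 + D * B ^ 2 = 1 ^ 2)%N -> A = 1%N /\ B = 0%N.
Proof. move=> h1; case: B => [|B] h; nia. Qed.

Lemma abs1 (a : int) : `|a|%N = 1%N -> a = 1 \/ a = -1.
Proof. move=> h; lia. Qed.

Lemma pnz (p : nat) : prime p -> p%:R != 0 :> algC.
Proof. by move=> pp; rewrite pnatr_eq0; case: (p) pp. Qed.

Lemma mainL (D : nat) : (1 < D)%N -> squarefree D ->
  ((- (D%:Z)) %% 4)%Z = 2 \/ ((- (D%:Z)) %% 4)%Z = 3 ->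
  class_group_elem2 (- (4 * D)%:Z) ->
  forall c : nat, (0 < c)%N -> forall a b : int,
  a ^+ 2 + D%:Z * b ^+ 2 = (c%:Z) ^+ 2 -> gcdz a b = 1 ->
  exists (s : bool) (e : nat -> bool),
    phi D a b / c%:R =
      (-1) ^+ s * \prod_(p <- primes c) zeta D p ^ ((-1) ^+ e p * (logn p c)%:Z).
Proof.
move=> hD1 hDsf hDmod hcl c; elim: c {-2}c (leqnn c) => [|n IH] c hc c0 a b hn gab.
  by move: hc c0; case: (c).
case: (ltnP 1 c) => c1; last first.
  have ec : c = 1%N by apply/eqP; rewrite eqn_leq c1 c0.
  subst c.
  have [hA hB] := unit_sol hD1 (abs_norm hn).
  have b0 : b = 0 by apply/eqP; rewrite -absz_eq0 hB.
  subst b.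
  exists (a == -1), xpred0; rewrite big_nil mulr1 /phi mul0r addr0 divr1.
  by case: (abs1 hA) => ->.
set p := pdiv c.
have pp : prime p := pdiv_prime c1.
have pc : (p %| c)%N := pdiv_dvd c.
have [p2 hl] := primefacts hD1 hDsf hDmod hn gab pp pc.
have pD : ~~ (p %| D)%N by case/andP: hl.
have [x0 [y0 [x00 y00 cxy hxy hz]]] := zeta_spec hD1 pp p2 hl hcl.
set X := x0%:Z; set Y := y0%:Z.
have hx : X ^+ 2 + D%:Z * Y ^+ 2 = p%:Z ^+ 2 by apply: nat2int.
have gx : gcdz X Y = 1 by rewrite /gcdz /= (eqP cxy).
have [m cop hcm] := pfactor_coprime pp c0.
set al := logn p c in hcm *.
have al0 : (0 < al)%N by rewrite logn_gt0 mem_primes pp c0 pc.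
have m0 : (0 < m)%N by move: c0; rewrite hcm muln_gt0 => /andP[].
have pal1 : (1 < p ^ al)%N by rewrite -{1}(expn0 p) ltn_exp2l // prime_gt1.
have mc : (m < c)%N by rewrite hcm ltn_Pmulr.
have pm : ~~ (p %| m)%N by rewrite -prime_coprime.
have [eps [y [hy ht]]] : exists (eps : bool) (y : int),
    y = (if eps then - Y else Y) /\ (p%:Z %| b * X - a * y)%Z.
  have : (p%:Z %| (b * X - a * Y) * (b * X + a * Y))%Z.
    have -> : (b * X - a * Y) * (b * X + a * Y) =
      b ^+ 2 * (X ^+ 2 + D%:Z * Y ^+ 2) - Y ^+ 2 * (a ^+ 2 + D%:Z * b ^+ 2) by ring.
    by rewrite hx hn; apply: rpredB; apply: dvdz_mull; apply: dvdz_exp => //; rewrite dvdzE.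
  case/(zEuclid pp) => h; [exists false, Y | exists true, (- Y)]; split=> //.
  by rewrite mulrN opprK.
have hx' : X ^+ 2 + D%:Z * y ^+ 2 = p%:Z ^+ 2 by case: eps hy => ->; rewrite ?sqrrN.
have gx' : gcdz X y = 1 by case: eps hy => ->; rewrite ?gcdzN.
have pk : (p ^ al %| c)%N by rewrite hcm dvdn_mull.
have [a' [b' [hn' [g' e']]]] := peel pp p2 pD hx' gx' hn gab pk (fun _ => ht).
have cm : (c %/ p ^ al)%N = m by rewrite hcm mulnK // expn_gt0 prime_gt0.
rewrite cm in hn'.
have [s [e hIH]] := IH m (leq_trans mc hc) m0 a' b' hn' g'.
exists s, (fun q => if q == p then eps else e q).
have pe : perm_eq (primes c) (p :: primes m).
  apply: uniq_perm; first exact: primes_uniq.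
    by rewrite /= primes_uniq andbT mem_primes (negbTE pm) !andbF.
  move=> q; rewrite in_cons !mem_primes c0 m0 /=.
  case: (eqVneq q p) => [->|nqp]; first by rewrite pp pc.
  rewrite /=; case qp: (prime q) => //=.
  by rewrite hcm Euclid_dvdM // Euclid_dvdX // (dvdn_prime2 qp pp) (negbTE nqp) /= orbF.
rewrite (perm_big _ pe) big_cons /= eqxx.
rewrite (eq_big_seq (fun q => zeta D q ^ ((-1) ^+ e q * (logn q m)%:Z))); last first.
  move=> q; rewrite mem_primes => /and3P [qp _ qm].
  have nqp : (q == p) = false by apply/negbTE; apply: contraNneq pm => <-.
  rewrite nqp; congr (_ ^ (_ * Posz _)).
  rewrite hcm lognM // ?expn_gt0 ?prime_gt0 // lognX (logn_prime q pp) nqp.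
  by rewrite muln0 addn0.
rewrite mulrCA -hIH.
have hprod : phi D X Y * phi D X (- Y) = p%:R ^+ 2.
  rewrite phiM.
  have -> : X * X - D%:Z * Y * - Y = p%:Z ^+ 2 by rewrite -hx; ring.
  have -> : X * - Y + Y * X = 0 by ring.
  by rewrite /phi mul0r addr0 rmorphXn.
have Pn := pnz pp.
have nz : phi D X Y != 0.
  apply/negP => /eqP h0; move: hprod; rewrite h0 mul0r => /esym/eqP.
  by rewrite expf_eq0 (negbTE Pn) andbF.
have hzy : zeta D p ^ ((-1) ^+ eps * al%:Z) = (phi D X y / p%:R) ^+ al.
  rewrite hz; case: eps hy => ->.
    rewrite expr1 mulN1r -exprz_inv invf_div /=.
    by congr (_ ^+ _); apply/eqP; rewrite eqr_div // -expr2 -hprod mulrC.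
  by rewrite /= expr0 mul1r.
rewrite hzy e' hcm natrM natrX expr_div_n.
have mn : m%:R != 0 :> algC by rewrite pnatr_eq0 -lt0n.
field.
by rewrite mn expf_neq0.
Qed.

Lemma from_GD (D : nat) (a b : int) (c : nat) : (1 < D)%N -> (0 < c)%N ->
  in_GD D ((a%:~R + b%:~R * sqrtmD D) / c%:R) ->
  a ^+ 2 + D%:Z * b ^+ 2 = (c%:Z) ^+ 2.
Proof.
move=> D1 c0 [u [v [ez hn]]].
set s := sqrtmD D in ez.
have cn : c%:R != 0 :> algC by rewrite pnatr_eq0 -lt0n.
have cnq : c%:R != 0 :> rat by rewrite pnatr_eq0 -lt0n.
set al : rat := u - a%:~R / c%:R; set be : rat := v - b%:~R / c%:R.
have E : ratr al + ratr be * s = 0.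
  rewrite /al /be !rmorphB !fmorph_div /= !rmorph_int !rmorph_nat.
  have -> : ratr u - a%:~R / c%:R + (ratr v - b%:~R / c%:R) * s =
     (ratr u + ratr v * s) - (a%:~R + b%:~R * s) / c%:R :> algC by field.
  by rewrite -ez subrr.
have hal : ratr al = - (ratr be * s) :> algC.
  by apply/eqP; rewrite -addr_eq0 E.
have E2 : ratr (al ^+ 2 + D%:R * be ^+ 2) = 0 :> algC.
  rewrite rmorphD rmorphM rmorph_nat !rmorphXn /= hal sqrrN exprMn /s sq_s.
  rewrite -[(D%:Z)%:~R]/(D%:R : algC); ring.
have E3 : al ^+ 2 + D%:R * be ^+ 2 = 0 by move/eqP: E2; rewrite fmorph_eq0 => /eqP.
have Dn : D%:R != 0 :> rat by rewrite pnatr_eq0; case: (D) D1.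
have := eqxx (al ^+ 2 + D%:R * be ^+ 2); rewrite {2}E3.
have h1 : 0 <= al ^+ 2 := sqr_ge0 al.
have h2 : 0 <= D%:R * be ^+ 2 := mulr_ge0 (ler0n _ _) (sqr_ge0 be).
rewrite (paddr_eq0 h1 h2) => /andP [a2 b2].
have a0 : al = 0 by move: a2; rewrite expf_eq0 /= => /eqP.
have b0 : be = 0 by move: b2; rewrite mulf_eq0 (negbTE Dn) /= expf_eq0 /= => /eqP.
have ua : u = a%:~R / c%:R by apply/eqP; rewrite -subr_eq0 -/al a0.
have vb : v = b%:~R / c%:R by apply/eqP; rewrite -subr_eq0 -/be b0.
rewrite ua vb in hn.
apply: (@intr_inj rat); rewrite rmorphD rmorphM !rmorphXn /=.

transitivity ((c%:Z)%:~R ^+ 2 * ((a%:~R / c%:R) ^+ 2 + D%:R * (b%:~R / c%:R) ^+ 2) : rat); last by rewrite hn mulr1.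
change ((a%:~R) ^+ 2 + D%:R * (b%:~R) ^+ 2 = (c%:R) ^+ 2 * ((a%:~R / c%:R) ^+ 2 + D%:R * (b%:~R / c%:R) ^+ 2) :> rat).
by field.
Qed.

Theorem theorem3p6 (D : nat)
  (hD1 : (1 < D)%N) (hDsf : squarefree D)
  (hDmod : ((- (D%:Z)) %% 4)%Z = 2 \/ ((- (D%:Z)) %% 4)%Z = 3)
  (hcl : class_group_elem2 (- (4 * D)%:Z))
  (a b : int) (c : nat)
  (hz : in_GD D ((a%:~R + b%:~R * sqrtmD D) / c%:R))
  (hab : gcdz a b = 1) (hc : (1 < c)%N) :
  (forall p : nat, p \in primes c -> odd p /\ legendre_negD_one D p) /\
  exists (s : bool) (e : nat -> bool),
    (a%:~R + b%:~R * sqrtmD D) / c%:R =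
      (-1) ^+ s * \prod_(p <- primes c) zeta D p ^ ((-1) ^+ e p * (logn p c)%:Z).
Proof.
have c0 : (0 < c)%N by apply: ltnW.
have hn := from_GD hD1 c0 hz.
split; last exact: (mainL hD1 hDsf hDmod hcl c0 hn hab).
move=> p; rewrite mem_primes => /and3P [pp _ pc].
have [p2 hl] := primefacts hD1 hDsf hDmod hn hab pp pc.
split=> //; case: (even_prime pp) => // e.
by move: p2; rewrite e.
Qed.
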